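(* Let $k>l\ge0$ be integers, $\xi\in\mathbb{C}$, $f:\mathbb{N}\to[0,\infty)$, and $A=\xi(a^\dagger)^ka^l+\xi^*(a^\dagger)^la^k+f(a^\dagger a)$ with domain $\mathcal{D}_0$. Then $A$ has equal deficiency indices $\dim\operatorname{Ran}(A+i)^\perp=\dim\operatorname{Ran}(A-i)^\perp$, and thus admits self-adjoint extensions.
   Context: $\mathbb{N}=\{0,1,2,\dots\}$. $\mathcal{H}$ is a separable complex Hilbert space with orthonormal basis $(\phi_n)_{n\in\mathbb{N}}$; $\mathcal{D}_0$ is the set of finite linear combinations of the $\phi_n$. The operators $a,a^\dagger$ have domain $\mathcal{D}_0$ and act by $a\phi_n=\sqrt{n}\,\phi_{n-1}$ ($a\phi_0=0$), $a^\dagger\phi_n=\sqrt{n+1}\,\phi_{n+1}$, extended linearly. $f(a^\dagger a)$ has domain $\mathcal{D}_0$ and $f(a^\dagger a)\phi_n=f(n)\phi_n$. *)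

(* Defs.v *)
From Stdlib Require Import Reals.
From Coquelicot Require Import Coquelicot.
Open Scope R_scope.

(* H = l^2(N): a vector is its coefficient sequence w.r.t. (phi_n). *)
Definition vec := nat -> C.

Definition l2 (psi : vec) : Prop := ex_series (fun n => (Cmod (psi n)) ^ 2).

(* D_0: finitely supported sequences (finite combinations of the phi_n). *)
Definition fin_supp (u : vec) : Prop := exists N : nat, forall m, (N <= m)%nat -> u m = 0%C.

Definition phi (n : nat) : vec := fun m => if Nat.eqb m n then 1%C else 0%C.

Fixpoint csum (g : nat -> C) (M : nat) : C :=
  match M with O => 0%C | S M' => Cplus (csum g M') (g M') end.

(* a phi_n = sqrt n phi_{n-1}:  (a u)_m = sqrt(m+1) u_{m+1} *)
Definition ann (u : vec) : vec := fun m => Cmult (RtoC (sqrt (INR (S m)))) (u (S m)).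
(* a^dag phi_n = sqrt(n+1) phi_{n+1}: (a^dag u)_0 = 0, (a^dag u)_{m+1} = sqrt(m+1) u_m *)
Definition cre (u : vec) : vec := fun m =>
  match m with O => 0%C | S m' => Cmult (RtoC (sqrt (INR m))) (u m') end.
(* f(a^dag a) phi_n = f(n) phi_n *)
Definition fN (f : nat -> R) (u : vec) : vec := fun m => Cmult (RtoC (f m)) (u m).

Fixpoint opow (T : vec -> vec) (k : nat) (u : vec) : vec :=
  match k with O => u | S k' => T (opow T k' u) end.

Definition Aop (k l : nat) (xi : C) (f : nat -> R) (u : vec) : vec := fun m =>
  Cplus (Cplus (Cmult xi (opow cre k (opow ann l u) m))
               (Cmult (Cconj xi) (opow cre l (opow ann k u) m)))
        (fN f u m).

(* <v, psi> = 0 for finitely supported v (inner product antilinear in 1st slot) *)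
Definition orth (v psi : vec) : Prop :=
  forall M : nat, (forall m, (M <= m)%nat -> v m = 0%C) ->
    csum (fun m => Cmult (Cconj (v m)) (psi m)) M = 0%C.

Definition ran_perp (T : vec -> vec) (z : C) (psi : vec) : Prop :=
  l2 psi /\ forall u, fin_supp u -> orth (fun m => Cplus (T u m) (Cmult z (u m))) psi.

Definition has_indep (V : vec -> Prop) (n : nat) : Prop :=
  exists v : nat -> vec, (forall i, (i < n)%nat -> V (v i)) /\
    forall c : nat -> C,
      (forall m, csum (fun i => Cmult (c i) (v i m)) n = 0%C) ->
      forall i, (i < n)%nat -> c i = 0%C.

(* equal dimension (in {0,1,...,infinity}) of two subspaces *)
Definition same_dim (V W : vec -> Prop) : Prop :=
  forall n : nat, has_indep V n <-> has_indep W n.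

(* Main.v *)
Require Import Defs.
From Stdlib Require Import Reals Lia Lra Psatz FunctionalExtensionality.
From Coquelicot Require Import Coquelicot.

Ltac csolve :=
  intros; repeat match goal with x : C |- _ => revert x end; intros;
  repeat match goal with x : C |- _ => destruct x as [?x ?x] end;
  unfold Cmult, Cplus, Cconj, RtoC, Copp, Cminus, Ci; simpl;
  apply injective_projections; simpl; ring.

Fixpoint cpow (u : C) (n : nat) : C :=
  match n with O => 1%C | S n' => Cmult u (cpow u n') end.

Definition cc (d : nat) (u : C) (m : nat) : C := cpow u (m / d).
Definition J (d : nat) (u : C) (s : nat) (v : vec) : vec :=
  fun m => Cconj (Cmult (cc d u (m + s)) (v m)).
Definition scal (a : C) (v : vec) : vec := fun m => Cmult a (v m).

Lemma alg1 (r : R) (a b : C) : Cmult (RtoC r) (Cconj (Cmult a b)) = Cconj (Cmult a (Cmult (RtoC r) b)).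
Proof. csolve. Qed.
Lemma alg0 (a : C) : Cconj (Cmult a 0%C) = 0%C.
Proof. csolve. Qed.
Lemma alg_scal0 (a : C) : (RtoC 0) = Cmult a (RtoC 0).
Proof. csolve. Qed.
Lemma alg_comm3 (r a b : C) : Cmult r (Cmult a b) = Cmult a (Cmult r b).
Proof. csolve. Qed.

Lemma alg_per (u c w : C) : Cconj (Cmult (Cmult u c) w) = Cmult (Cconj u) (Cconj (Cmult c w)).
Proof. csolve. Qed.
Lemma scal_scal a b v : scal a (scal b v) = scal (Cmult a b) v.
Proof. apply functional_extensionality; intro m; unfold scal. csolve. Qed.
Lemma scal_1 v : scal 1%C v = v.
Proof. apply functional_extensionality; intro m; unfold scal. csolve. Qed.

Section S.
Variables (d : nat) (u : C).

Lemma ann_J s v : ann (J d u s v) = J d u (S s) (ann v).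
Proof.
  apply functional_extensionality; intro m; unfold ann, J.
  replace (m + S s)%nat with (S m + s)%nat by lia. apply alg1.
Qed.

Lemma opow_ann_J j : forall s v, opow ann j (J d u s v) = J d u (s + j) (opow ann j v).
Proof.
  induction j; intros s v; simpl.
  - now rewrite Nat.add_0_r.
  - rewrite IHj, ann_J. now rewrite Nat.add_succ_r.
Qed.

Lemma cre_J s w : cre (J d u (S s) w) = J d u s (cre w).
Proof.
  apply functional_extensionality; intro m; unfold cre, J.
  destruct m as [|m].
  - now rewrite alg0.
  - replace (m + S s)%nat with (S m + s)%nat by lia. apply alg1.
Qed.

Lemma opow_cre_J j : forall s w, opow cre j (J d u (s + j) w) = J d u s (opow cre j w).
Proof.
  induction j; intros s w; simpl.
  - now rewrite Nat.add_0_r.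
  - replace (s + S j)%nat with (S s + j)%nat by lia.
    rewrite IHj. apply cre_J.
Qed.

Lemma ann_scal a v : ann (scal a v) = scal a (ann v).
Proof. apply functional_extensionality; intro m; unfold ann, scal. apply alg_comm3. Qed.

Lemma cre_scal a v : cre (scal a v) = scal a (cre v).
Proof.
  apply functional_extensionality; intro m; unfold cre, scal.
  destruct m. apply alg_scal0. apply alg_comm3.
Qed.

Lemma opow_scal T a j v : (forall w, T (scal a w) = scal a (T w)) ->
  opow T j (scal a v) = scal a (opow T j v).
Proof. intro H; induction j; simpl; auto. rewrite IHj; auto. Qed.

Lemma cpow_S n : cpow u (n + 1) = Cmult u (cpow u n).
Proof. rewrite Nat.add_1_r. reflexivity. Qed.

Lemma J_period s v : (0 < d)%nat -> J d u (s + d) v = scal (Cconj u) (J d u s v).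
Proof.
  intro Hd. apply functional_extensionality; intro m; unfold J, scal, cc.
  replace (m + (s + d))%nat with ((m + s) + 1 * d)%nat by lia.
  rewrite Nat.div_add by lia. rewrite cpow_S.
  apply alg_per.
Qed.


End S.

Lemma final_alg (xi u c c0 c1 c2 : C) (r : R) :
  Cmult xi u = Cconj xi -> Cmult (Cconj xi) (Cconj u) = xi ->
  Cplus (Cplus (Cmult xi (Cmult u (Cconj (Cmult c c0))))
               (Cmult (Cconj xi) (Cmult (Cconj u) (Cconj (Cmult c c1)))))
        (Cmult r (Cconj (Cmult c c2)))
  = Cconj (Cmult c (Cplus (Cplus (Cmult xi c0) (Cmult (Cconj xi) c1)) (Cmult r c2))).
Proof.
  intros H1 H2.
  replace (Cplus (Cplus (Cmult xi (Cmult u (Cconj (Cmult c c0))))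
               (Cmult (Cconj xi) (Cmult (Cconj u) (Cconj (Cmult c c1)))))
        (Cmult r (Cconj (Cmult c c2))))
  with (Cplus (Cplus (Cmult (Cmult xi u) (Cconj (Cmult c c0)))
               (Cmult (Cmult (Cconj xi) (Cconj u)) (Cconj (Cmult c c1))))
        (Cmult r (Cconj (Cmult c c2)))) by csolve.
  rewrite H1, H2. csolve.
Qed.

Lemma opow_ann_J0 d u j v : opow ann j (J d u 0 v) = J d u j (opow ann j v).
Proof. exact (opow_ann_J d u j 0 v). Qed.
Lemma opow_cre_J0 d u j w : opow cre j (J d u j w) = J d u 0 (opow cre j w).
Proof. exact (opow_cre_J d u j 0 w). Qed.

Lemma A_J l d u xi f v : (0 < d)%nat -> Cmult u (Cconj u) = 1%C ->
  Cmult xi u = Cconj xi -> Cmult (Cconj xi) (Cconj u) = xi ->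
  Aop (l + d) l xi f (J d u 0 v) = J d u 0 (Aop (l + d) l xi f v).
Proof.
  intros Hd Hu H1 H2.
  assert (HJ : forall s w, J d u s w = scal u (J d u (s + d) w)).
  { intros s w. rewrite J_period by exact Hd. rewrite scal_scal, Hu. now rewrite scal_1. }
  apply functional_extensionality; intro m. unfold Aop at 1.
  rewrite !opow_ann_J0.
  rewrite (J_period d u l (opow ann (l + d) v) Hd).
  rewrite (HJ l (opow ann l v)).
  rewrite !(opow_scal cre) by apply cre_scal.
  rewrite !opow_cre_J0. unfold scal, J, fN, Aop. rewrite Nat.add_0_r. unfold fN.
  generalize (cc d u m) (opow cre (l + d) (opow ann l v) m) (opow cre l (opow ann (l + d) v) m) (v m) (f m).
  intros. apply final_alg; assumption.
Qed.

Lemma exists_u (xi : C) : exists u : C,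
  Cmult xi u = Cconj xi /\ Cmult (Cconj xi) (Cconj u) = xi /\
  Cmult u (Cconj u) = 1%C /\ Cmod u = 1.
Proof.
  destruct xi as [a b].
  destruct (Req_dec (a * a + b * b) 0) as [H0 | H0].
  - assert (a = 0) by nra. assert (b = 0) by nra. subst.
    exists 1%C. unfold Cmult, Cconj, Cmod, RtoC; simpl; repeat split;
      try (apply injective_projections; simpl; ring).
    transitivity (sqrt 1); [f_equal; ring | apply sqrt_1].
  - set (p := (a * a - b * b) / (a * a + b * b)).
    set (q := - (2 * a * b) / (a * a + b * b)).
    assert (Hpq : p * p + q * q = 1) by (unfold p, q; field; auto).
    assert (E1 : a * p - b * q = a) by (unfold p, q; field; auto).
    assert (E2 : a * q + b * p = - b) by (unfold p, q; field; auto).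
    exists (p, q). unfold Cmult, Cconj, Cmod, RtoC; simpl; repeat split;
      try (apply injective_projections; simpl; nra).
    transitivity (sqrt 1); [f_equal; nra | apply sqrt_1].
Qed.

Lemma Cmod_cpow u n : Cmod u = 1 -> Cmod (cpow u n) = 1.
Proof.
  intro H; induction n; simpl.
  - unfold Cmod; simpl. transitivity (sqrt 1); [f_equal; ring | apply sqrt_1].
  - rewrite Cmod_mult, H, IHn. ring.
Qed.

Lemma csum_conj g h M : (forall m, g m = Cconj (h m)) -> csum g M = Cconj (csum h M).
Proof.
  intro H; induction M; simpl.
  - csolve.
  - rewrite IHM, H. generalize (csum h M) (h M). csolve.
Qed.

Lemma csum_lin (c : nat -> C) (g : nat -> C) a n :
  csum (fun i => Cmult (c i) (Cconj (Cmult a (g i)))) n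
  = Cconj (Cmult a (csum (fun i => Cmult (Cconj (c i)) (g i)) n)).
Proof.
  induction n; simpl.
  - csolve.
  - rewrite IHn. generalize (csum (fun i : nat => (Cconj (c i) * g i)%C) n) (c n) (g n). csolve.
Qed.

Lemma conj0 (a : C) : Cconj a = 0%C -> a = 0%C.
Proof.
  intro H. replace a with (Cconj (Cconj a)) by csolve. rewrite H. csolve.
Qed.

Lemma ranperp_J l d u xi f z z' psi :
  (0 < d)%nat -> Cmult u (Cconj u) = 1%C ->
  Cmult xi u = Cconj xi -> Cmult (Cconj xi) (Cconj u) = xi ->
  (forall m, Cmod (cc d u m) = 1) -> z = Cconj z' ->
  ran_perp (Aop (l + d) l xi f) z psi -> ran_perp (Aop (l + d) l xi f) z' (J d u 0 psi).
Proof.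
  intros Hd Hu H1 H2 Hc Hz [Hl Ho]. split.
  - unfold l2 in *. eapply ex_series_ext; [|exact Hl]. intro n; simpl.
    unfold J. rewrite Cmod_conj, Cmod_mult, Hc. ring.
  - intros w [N HN] M HM.
    assert (Hfs : fin_supp (J d u 0 w)).
    { exists N. intros m Hm. unfold J. rewrite HN by exact Hm. apply alg0. }
    specialize (Ho _ Hfs M).
    assert (Heq : forall m, Cplus (Aop (l + d) l xi f (J d u 0 w) m) (Cmult z (J d u 0 w m))
       = J d u 0 (fun m => Cplus (Aop (l + d) l xi f w m) (Cmult z' (w m))) m).
    { intro m. rewrite A_J by assumption. unfold J. subst z.
      generalize (cc d u (m + 0)) (Aop (l + d) l xi f w m) (w m). csolve. }
    assert (Ho' := Ho).
    rewrite (csum_conj _ (fun m => Cmult (Cconj (Cplus (Aop (l + d) l xi f (J d u 0 w) m) (Cmult z (J d u 0 w m)))) (psi m))).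
    + rewrite Ho'. csolve.
      intros m Hm. rewrite Heq. unfold J at 1. cbv beta. rewrite HM by exact Hm. apply alg0.
    + intro m. rewrite Heq. unfold J.
      generalize (cc d u (m + 0)) (Cplus (Aop (l + d) l xi f w m) (Cmult z' (w m))) (psi m). csolve.
Qed.

Lemma indep_J (V W : vec -> Prop) d u :
  (forall m, Cmod (cc d u m) = 1) -> (forall psi, V psi -> W (J d u 0 psi)) ->
  forall n, has_indep V n -> has_indep W n.
Proof.
  intros Hc HVW n [v [Hv Hind]].
  exists (fun i => J d u 0 (v i)). split.
  - intros i Hi. apply HVW, Hv, Hi.
  - intros c Hsum i Hi.
    assert (HS : forall m, csum (fun i => Cmult (Cconj (c i)) (v i m)) n = 0%C).
    { intro m. specialize (Hsum m). unfold J in Hsum.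
      rewrite (csum_lin c (fun i => v i m) (cc d u (m + 0)) n) in Hsum.
      apply Cmod_eq_0. apply (f_equal Cmod) in Hsum.
      rewrite Cmod_conj, Cmod_mult, Hc, Cmod_0 in Hsum. lra. }
    apply conj0. exact (Hind (fun i => Cconj (c i)) HS i Hi).
Qed.

Theorem proposition4p1 (k l : nat) (xi : C) (f : nat -> R) :
  (l < k)%nat -> (forall n, 0 <= f n)%R ->
  same_dim (ran_perp (Aop k l xi f) Ci) (ran_perp (Aop k l xi f) (Copp Ci)).
Proof.
  intros Hlk _.
  assert (Hd : exists d, k = (l + d)%nat /\ (0 < d)%nat) by (exists (k - l)%nat; lia).
  destruct Hd as [d [Hk Hd]]. subst k.
  destruct (exists_u xi) as [u [H1 [H2 [Hu Hmod]]]].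
  assert (Hc : forall m, Cmod (cc d u m) = 1) by (intro m; apply Cmod_cpow, Hmod).
  intro n. split; apply indep_J with d u; try exact Hc; intros psi Hpsi.
  - apply (ranperp_J l d u xi f Ci (Copp Ci) psi); try assumption. csolve.
  - apply (ranperp_J l d u xi f (Copp Ci) Ci psi); try assumption. csolve.
Qed.
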